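(* In the bandit setting of online Pandora's Box, competing with the non-adaptive benchmark, there is an online algorithm that is (i) $3.16$-approximate no-regret when one box must be selected; (ii) $12.64$-approximate no-regret when $k$ distinct boxes must be selected; (iii) $O(\log k)$-approximate no-regret when a basis of a given matroid of rank $k$ on the boxes must be selected.
   Context: Online Pandora's Box: there are $n$ boxes $\mathcal{B}=\{1,\dots,n\}$. An oblivious adversary fixes in advance, for each round $t=1,\dots,T$, a scenario $c(t)=(c^t_1,\dots,c^t_n)$ of nonnegative box values. In each round the algorithm, without knowing $c(t)$, opens boxes one at a time, observing each opened value, then selects among the opened boxes: a single box (cost $|P_t|+\min_{i\in P_t}c^t_i$, $P_t$ the set opened), or $k$ distinct opened boxes (cost $|P_t|$ plus sum of selected values), or an opened set forming a basis of a given matroid of rank $k$ on $\mathcal{B}$ (cost $|P_t|$ plus sum of selected values). Bandit setting: the algorithm only learns the values of the boxes it opened in each round. A non-adaptive strategy fixes a set $S\subseteq\mathcal{B}$ opened in every round and in each round makes the cheapest feasible selection among $S$; its round-$t$ cost is $|S|$ plus the value of that selection. The non-adaptive benchmark is $\mathrm{OPT}=\min_S\sum_{t=1}^T\mathrm{cost}_t(S)$. With $\mathcal{A}(t)$ the algorithm's round-$t$ cost, the algorithm is $\alpha$-approximate no-regret if $\frac1T\big(\mathbb{E}[\sum_t\mathcal{A}(t)]-\alpha\,\mathrm{OPT}\big)=o(1)$ as $T\to\infty$ (for fixed $n$). *)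

(* Defs.v *)
From HB Require Import structures.
From mathcomp Require Import all_boot all_order all_algebra.
From mathcomp Require Import reals.
Set Implicit Arguments. Unset Strict Implicit. Unset Printing Implicit Defensive.
Import Order.TTheory GRing.Theory Num.Theory.
Local Open Scope ring_scope.

(* Boxes are 'I_n.  A feasibility family [Fam : {set {set 'I_n}}] lists the
   admissible selections (singletons / k-subsets / matroid bases). *)

Section PB.
Variables (R : realType) (n : nat).

(* An action inside a round: open box i (inl i) or stop and select the opened
   set F (inr F). *)
Definition act := ('I_n + {set 'I_n})%type.

(* A history is the sequence of past actions together with what was observed:
   the value of the opened box for an [Open] action, and 0 (no information)
   for a [Select] action.  Bandit feedback: nothing else is revealed. *)
Definition history := seq (act * R).

(* A randomized online algorithm (behavioral strategy): given the history,
   a probability distribution over the next action. *)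
Definition strategy := history -> act -> R.

Definition step_open (P : {set 'I_n}) (e : act * R) : {set 'I_n} :=
  match e.1 with inl i => i |: P | inr _ => set0 end.

Definition opened (h : history) : {set 'I_n} := foldl step_open set0 h.

Definition rounds_done (h : history) : nat :=
  count (fun e : act * R => if e.1 is inr _ then true else false) h.

Definition legal (Fam : {set {set 'I_n}}) (h : history) (a : act) : bool :=
  match a with
  | inl i => i \notin opened h
  | inr F => (F \in Fam) && (F \subset opened h)
  end.

Definition valid_strategy (Fam : {set {set 'I_n}}) (s : strategy) : Prop :=
  forall h : history,
    (forall a, 0 <= s h a) /\ (\sum_(a : act) s h a = 1) /\
    (forall a, s h a != 0 -> legal Fam h a).

(* Expected cost of the algorithm against the (oblivious) scenario sequence
   c (round t uses scenario c t, t = 0 .. T-1), computed on the finite tree of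
   the interaction.  [fuel] bounds the number of remaining actions; each round
   uses at most n+1 actions, so fuel T*(n+1) suffices for valid strategies. *)
Fixpoint exp_cost (s : strategy) (c : nat -> {ffun 'I_n -> R}) (T : nat)
    (fuel : nat) (h : history) : R :=
  match fuel with
  | 0 => 0
  | f.+1 =>
    if (T <= rounds_done h)%N then 0 else
    let t := rounds_done h in
    \sum_(a : act) s h a *
      match a with
      | inl i => 1 + exp_cost s c T f (rcons h (a, c t i))
      | inr F => \sum_(i in F) c t i + exp_cost s c T f (rcons h (a, 0))
      end
  end.

Definition alg_cost (s : strategy) (c : nat -> {ffun 'I_n -> R}) (T : nat) : R :=
  exp_cost s c T (T * n.+1) [::].

(* The min is taken with neutral element
   sum_{i in S} c i, which (values being nonnegative) is >= every candidate,
   so this is the exact minimum whenever S contains a feasible set. *)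
Definition na_round_cost (Fam : {set {set 'I_n}}) (c : {ffun 'I_n -> R})
    (S : {set 'I_n}) : R :=
  #|S|%:R + \big[Num.min/(\sum_(i in S) c i)]_(F in Fam | F \subset S)
              (\sum_(i in F) c i).

Definition na_total (Fam : {set {set 'I_n}}) (c : nat -> {ffun 'I_n -> R})
    (T : nat) (S : {set 'I_n}) : R :=
  \sum_(t < T) na_round_cost Fam (c t) S.

(* OPT = min over sets S containing some feasible selection; the neutral
   element is the value at S = setT, itself a candidate when Fam is nonempty. *)
Definition OPT (Fam : {set {set 'I_n}}) (c : nat -> {ffun 'I_n -> R})
    (T : nat) : R :=
  \big[Num.min/na_total Fam c T setT]_(S : {set 'I_n} |
                                        [exists F in Fam, F \subset S])
     na_total Fam c T S.

Definition approx_no_regret (Fam : {set {set 'I_n}}) (B alpha : R)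
    (s : strategy) : Prop :=
  forall eps : R, 0 < eps -> exists T0 : nat, forall T : nat, (T0 <= T)%N ->
    forall c : nat -> {ffun 'I_n -> R},
      (forall t i, 0 <= c t i <= B) ->
      (alg_cost s c T - alpha * OPT Fam c T) / T%:R <= eps.

Definition single_fam : {set {set 'I_n}} := [set F : {set 'I_n} | #|F| == 1%N].
Definition ksub_fam (k : nat) : {set {set 'I_n}} := [set F : {set 'I_n} | #|F| == k].

Definition is_matroid (I : {set {set 'I_n}}) : Prop :=
  [/\ set0 \in I,
      (forall A B : {set 'I_n}, B \in I -> A \subset B -> A \in I) &
      (forall A B : {set 'I_n}, A \in I -> B \in I -> (#|A| < #|B|)%N ->
         exists2 x, x \in B :\: A & x |: A \in I)].

Definition is_basis (I : {set {set 'I_n}}) (B : {set 'I_n}) : bool :=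
  (B \in I) && [forall x, (x \notin B) ==> (x |: B \notin I)].

Definition bases (I : {set {set 'I_n}}) : {set {set 'I_n}} :=
  [set B : {set 'I_n} | is_basis I B].

Definition matroid_rank (I : {set {set 'I_n}}) (k : nat) : Prop :=
  (exists2 B, B \in I & #|B| = k) /\ (forall B, B \in I -> (#|B| <= k)%N).

End PB.

(* Main.v *)
Require Import Defs.
From HB Require Import structures.
From mathcomp Require Import all_boot all_order all_algebra.
From mathcomp Require Import reals sequences exp.
From mathcomp Require Import ring lra.
Set Implicit Arguments. Unset Strict Implicit. Unset Printing Implicit Defensive.
Import Order.TTheory GRing.Theory Num.Theory.
Local Open Scope ring_scope.

Section Alg.
Variables (R : realType) (n : nat) (Fam : {set {set 'I_n}}) (M : R).

Definition EE : {set {set 'I_n}} := [set S : {set 'I_n} | [exists F in Fam, F \subset S]].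
Definition gam : R := M^-1.
Definition eta : R := (2 * M ^+ 2)^-1.

Definition wt (L : {ffun {set 'I_n} -> R}) (S : {set 'I_n}) : R :=
  if S \in EE then expR (- (eta * L S)) else 0.
Definition Phi (L : {ffun {set 'I_n} -> R}) := \sum_(S : {set 'I_n}) wt L S.
Definition pp (L : {ffun {set 'I_n} -> R}) S := wt L S / Phi L.
Definition pi (L : {ffun {set 'I_n} -> R}) S := (1 - gam) * pp L S + gam * (S == setT)%:R.
Definition ell (c : {ffun 'I_n -> R}) S := na_round_cost Fam c S.
Definition upd (L : {ffun {set 'I_n} -> R}) (P : {set 'I_n}) (c : {ffun 'I_n -> R}) : {ffun {set 'I_n} -> R} :=
  if P == setT then [ffun S => L S + ell c S / pi L setT] else L.

Hypothesis M1 : 1 <= M.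
Hypothesis FamN : exists F0, F0 \in Fam.

Lemma M_gt0 : 0 < M. Proof. exact: lt_le_trans ltr01 M1. Qed.
Lemma gam_gt0 : 0 < gam. Proof. by rewrite invr_gt0 M_gt0. Qed.
Lemma gam_le1 : gam <= 1. Proof. by rewrite invf_le1 // M_gt0. Qed.
Lemma eta_gt0 : 0 < eta. Proof. by rewrite invr_gt0 mulr_gt0 // exprn_gt0 // M_gt0. Qed.

Lemma setT_EE : setT \in EE.
Proof. case: FamN => F0 HF; rewrite inE; apply/existsP; exists F0; by rewrite HF subsetT. Qed.

Lemma wt_ge0 L S : 0 <= wt L S.
Proof. rewrite /wt; case: ifP => _ //; exact: expR_ge0. Qed.

Lemma Phi_ge_wt L S : wt L S <= Phi L.
Proof.
rewrite /Phi (bigD1 S) //= lerDl; apply: sumr_ge0 => *; exact: wt_ge0.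
Qed.

Lemma Phi_gt0 L : 0 < Phi L.
Proof.
apply: lt_le_trans (Phi_ge_wt L setT); by rewrite /wt setT_EE expR_gt0.
Qed.

Lemma pp_ge0 L S : 0 <= pp L S.
Proof. by rewrite /pp divr_ge0 ?wt_ge0 // ltW // Phi_gt0. Qed.

Lemma sum_pp L : \sum_S pp L S = 1.
Proof. by rewrite /pp -mulr_suml divff // gt_eqF // Phi_gt0. Qed.

Lemma pi_ge0 L S : 0 <= pi L S.
Proof.
have := gam_le1; have := gam_gt0; have := pp_ge0 L S => *.
rewrite /pi; apply: addr_ge0; first by apply: mulr_ge0 => //; lra.
by apply: mulr_ge0; [lra|rewrite ler0n].
Qed.

Lemma sum_pi L : \sum_S pi L S = 1.
Proof.
rewrite /pi big_split /= -mulr_sumr sum_pp -mulr_sumr (bigD1 setT) //= eqxx big1.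
  by rewrite addr0 mulr1 mulr1 subrK.
by move=> S /negbTE ->.
Qed.

Lemma piT_ge L : gam <= pi L setT.
Proof.
have := gam_le1; have := gam_gt0; have := pp_ge0 L setT => *.
rewrite /pi eqxx mulr1 lerDr; apply: mulr_ge0 => //; lra.
Qed.

Lemma expR_le_half (y : R) : 0 <= y <= 1 -> expR (- y) <= 1 - y / 2.
Proof.
move=> /andP[y0 y1].
rewrite expRN.
have h1 : 1 + y <= expR y := expR_ge1Dx y.
have hp : 0 < 1 + y by lra.
apply: le_trans (_ : (1 + y)^-1 <= _).
  by rewrite lef_pV2 ?posrE ?expR_gt0.
rewrite -[X in X <= _]mul1r ler_pdivrMr //.
have : y * y <= y * 1 by rewrite ler_wpM2l.
nra.
Qed.

Lemma ln_le_sub1 (z : R) : 0 < z -> ln z <= z - 1.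
Proof. move=> z0; have := @le_ln1Dx R (z - 1); rewrite addrCA subrr addr0; apply; lra. Qed.


Section Step.
Variables (c : {ffun 'I_n -> R}) (Sst : {set 'I_n}).
Hypothesis ell_ge0 : forall S, 0 <= ell c S.
Hypothesis ell_leM : forall S, ell c S <= M.
Hypothesis Sst_EE : Sst \in EE.
Hypothesis ell_Sst : 1 <= ell c Sst.

Definition Gp (L : {ffun {set 'I_n} -> R}) := (2 / eta) * ln (Phi L) + 2 * L Sst.

Lemma Gp_ge0 L : 0 <= Gp L.
Proof.
rewrite /Gp.
have hw : wt L Sst <= Phi L := Phi_ge_wt L Sst.
have : - (eta * L Sst) <= ln (Phi L).
  rewrite -[X in X <= _]expRK ler_ln ?posrE ?expR_gt0 ?Phi_gt0 //.
  by move: hw; rewrite /wt Sst_EE.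
have he := eta_gt0.
move=> h.
have h1 : 2 / eta * (- (eta * L Sst)) <= 2 / eta * ln (Phi L) by rewrite ler_pM2l ?divr_gt0.
have e : 2 / eta * (- (eta * L Sst)) = - (2 * L Sst) by field; rewrite gt_eqF.
rewrite e in h1.
lra.
Qed.

Lemma step L :
  \sum_S pi L S * (ell c S + Gp (upd L S c)) <= 3 * ell c Sst + Gp L.
Proof.
set pT := pi L setT.
set L' := [ffun S => L S + ell c S / pT].
have pTg : gam <= pT := piT_ge L.
have g0 := gam_gt0; have g1 := gam_le1; have he := eta_gt0.
have pT0 : 0 < pT by lra.
have eq1 : \sum_S pi L S * (ell c S + Gp (upd L S c)) =
   \sum_S pi L S * ell c S + Gp L + pT * (Gp L' - Gp L).
  rewrite (eq_bigr (fun S => pi L S * ell c S + pi L S * Gp (upd L S c))); last by move=> *; rewrite mulrDr.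
  rewrite big_split /= -addrA; congr (_ + _).
  rewrite (bigD1 setT) //= /upd eqxx -/pT -/L'.
  rewrite (eq_bigr (fun S => pi L S * Gp L)); last by move=> S /negbTE ->.
  rewrite -mulr_suml.
  have : \sum_(S | S != setT) pi L S = 1 - pT.
    by rewrite -(sum_pi L) [in RHS](bigD1 setT) //= addrC addrK.
  move=> ->; ring.
set A := \sum_S pp L S * ell c S.
have A0 : 0 <= A by apply: sumr_ge0 => S _; apply: mulr_ge0; [exact: pp_ge0|exact: ell_ge0].
have h2 : \sum_S pi L S * ell c S <= A + 1.
  rewrite /pi (eq_bigr (fun S => (1 - gam) * (pp L S * ell c S) + gam * ((S == setT)%:R * ell c S))); last by move=> *; ring.
  rewrite big_split /= -!mulr_sumr -/A (bigD1 setT) //= eqxx mul1r big1; last by move=> S /negbTE ->; rewrite mul0r.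
  rewrite addr0.
  have : gam * ell c setT <= gam * M by apply: ler_wpM2l; [exact: ltW|exact: ell_leM].
  rewrite /gam mulVf ?gt_eqF ?M_gt0 // => h.
  have : (1 - gam) * A <= A by apply: ler_piMl => //; lra.
  rewrite /gam; lra.
have key : pT * (Gp L' - Gp L) <= - A + 2 * ell c Sst.
  set Ph := Phi L.
  have Ph0 : 0 < Ph := Phi_gt0 L.
  have hwt : forall S, wt L' S <= wt L S * (1 - eta * (ell c S / pT) / 2).
    move=> S; rewrite /wt ffunE; case: ifP => _; last by rewrite mul0r.
    rewrite mulrDr opprD expRD; apply: ler_wpM2l; first exact: expR_ge0.
    apply: expR_le_half.
    apply/andP; split; first by apply: mulr_ge0; [exact: ltW | apply: divr_ge0; [exact: ell_ge0| exact: ltW]].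
    have : ell c S / pT <= M / gam.
      apply: le_trans (_ : M / pT <= _); first by rewrite ler_pM2r ?invr_gt0.
      by rewrite ler_pM2l ?M_gt0 // lef_pV2 ?posrE.
    rewrite /gam invrK => h.
    apply: le_trans (_ : eta * (M * M) <= _); first by rewrite ler_pM2l.
    have Mn : M != 0 by rewrite gt_eqF // M_gt0.
    have -> : eta * (M * M) = 1 / 2 by rewrite /eta; field.
    lra.
  have hPhi : Phi L' <= Ph * (1 - eta / 2 * (A / pT)).
    apply: le_trans (_ : \sum_S wt L S * (1 - eta * (ell c S / pT) / 2) <= _).
      by apply: ler_sum => S _; exact: hwt.
    rewrite (eq_bigr (fun S => wt L S - (eta / 2 / pT) * (wt L S * ell c S))); last by move=> *; ring.
    set W := \sum_S wt L S * ell c S.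
    have eA : A = W / Ph by rewrite /A /W mulr_suml; apply: eq_bigr => S _; rewrite /pp /Ph; ring.
    rewrite sumrB -mulr_sumr -/(Phi L) -/Ph -/W eA.
    have -> : Ph * (1 - eta / 2 * (W / Ph / pT)) = Ph - eta / 2 / pT * W * (Ph / Ph) by ring.
    by rewrite divff ?gt_eqF // mulr1.
  have P'0 : 0 < Phi L' := Phi_gt0 L'.
  have hln : ln (Phi L') - ln Ph <= - (eta / 2 * (A / pT)).
    rewrite -ln_div ?posrE //.
    have hz : 0 < Phi L' / Ph by rewrite divr_gt0.
    apply: le_trans (ln_le_sub1 hz) _.
    have : Phi L' / Ph <= 1 - eta / 2 * (A / pT) by rewrite ler_pdivrMr // mulrC.
    lra.
  rewrite /Gp /L' ffunE.
  have -> : 2 / eta * ln (Phi [ffun S => L S + ell c S / pT]) + 2 * (L Sst + ell c Sst / pT) -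
     (2 / eta * ln Ph + 2 * L Sst) = 2 / eta * (ln (Phi L') - ln Ph) + 2 * ell c Sst / pT.
    by rewrite /L'; ring.
  rewrite mulrDr.
  have -> : pT * (2 * ell c Sst / pT) = 2 * ell c Sst by field; rewrite gt_eqF.
  rewrite lerD2r.
  have : 2 / eta * (ln (Phi L') - ln Ph) <= 2 / eta * (- (eta / 2 * (A / pT))).
    by rewrite ler_pM2l ?divr_gt0.
  have -> : 2 / eta * - (eta / 2 * (A / pT)) = - (A / pT) by field; apply/andP; split; rewrite gt_eqF.
  move=> h; rewrite -(ler_pM2l pT0) in h; apply: le_trans h _.
  by rewrite mulrN mulrC divfK ?gt_eqF.
rewrite eq1; move: key h2 ell_Sst; set X := pT * _; set Y := \sum_S _; lra.
Qed.

End Step.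

Definition agree (P S : {set 'I_n}) (j : nat) : bool :=
  [forall i : 'I_n, (i < j)%N ==> ((i \in S) == (i \in P))].
Definition GG (g : {set 'I_n} -> R) (P : {set 'I_n}) (j : nat) : R :=
  \sum_(S | agree P S j) g S.
Definition mass (L : {ffun {set 'I_n} -> R}) P j := GG (pi L) P j.
Definition cur (P : {set 'I_n}) : nat := \max_(i in P) i.+1.

Definition feas (P : {set 'I_n}) (F : {set 'I_n}) : bool := (F \in Fam) && (F \subset P).

Definition Fstar (P : {set 'I_n}) (cv : {ffun 'I_n -> R}) : {set 'I_n} :=
  if [pick F | feas P F] is Some F0 then
    Order.arg_min F0 (feas P) (fun F => \sum_(i in F) cv i)
  else set0.

Definition a0 (P : {set 'I_n}) (cv : {ffun 'I_n -> R}) : act n :=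
  if [exists F, feas P F] then inr (Fstar P cv)
  else if [pick i | i \notin P] is Some i then inl i else inr set0.

Definition stT := ({ffun {set 'I_n} -> R} * {ffun 'I_n -> R} * {set 'I_n})%type.
Definition stepst (x : stT) (e : act n * R) : stT :=
  match e.1 with
  | inl i => (x.1.1, [ffun k => if k == i then e.2 else x.1.2 k], i |: x.2)
  | inr _ => (upd x.1.1 x.2 x.1.2, x.1.2, set0)
  end.
Definition st (h : history R n) : stT := foldl stepst (0, 0, set0) h.

Definition strat : strategy R n := fun h a =>
  let L := (st h).1.1 in let cv := (st h).1.2 in let P := opened h in
  let j := cur P in let m := mass L P j in
  if 0 < m then
    match a with
    | inl i => if (j <= i)%N then mass L (i |: P) i.+1 / m else 0
    | inr F => if F == Fstar P cv then mass L P n / m else 0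
    end
  else (a == a0 P cv)%:R.

Lemma st_rcons (h : history R n) e : st (rcons h e) = stepst (st h) e.
Proof. by rewrite /st foldl_rcons. Qed.

Lemma opened_rcons (h : history R n) e : opened (rcons h e) = step_open (opened h) e.
Proof. by rewrite /opened foldl_rcons. Qed.

Lemma st_opened (h : history R n) : (st h).2 = opened h.
Proof.
elim/last_ind: h => [//|h e IH].
by rewrite st_rcons opened_rcons /stepst /step_open; case: e.1 => //= i; rewrite IH.
Qed.

Lemma rounds_rcons (h : history R n) e : rounds_done (rcons h e) =
  (rounds_done h + (if e.1 is inr _ then 1 else 0))%N.
Proof. by rewrite /rounds_done -cats1 count_cat /=; case: e.1 => _ /=; rewrite addn0. Qed.

Lemma cur_lt (P : {set 'I_n}) (i : 'I_n) : i \in P -> (i < cur P)%N.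
Proof. by move=> iP; rewrite /cur (bigD1 i) //= leq_max leqnn. Qed.

Lemma cur_le (P : {set 'I_n}) : (cur P <= n)%N.
Proof. by rewrite /cur; apply/bigmax_leqP => i _; exact: ltn_ord. Qed.

Lemma cur_set0 : cur set0 = 0%N.
Proof. by rewrite /cur big_pred0 // => i; rewrite inE. Qed.

Lemma cur_U1 (P : {set 'I_n}) (i : 'I_n) : (cur P <= i)%N -> cur (i |: P) = i.+1.
Proof.
move=> h; apply/eqP; rewrite eqn_leq; apply/andP; split.
  apply/bigmax_leqP => k; rewrite !inE => /orP[/eqP -> //|kP].
  by apply: leq_trans (cur_lt kP) _; apply: leq_trans h _.
by apply: cur_lt; rewrite !inE eqxx.
Qed.

Lemma agree_n (P S : {set 'I_n}) : agree P S n = (S == P).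
Proof.
apply/forallP/eqP => [h|->]; last by move=> i; rewrite eqxx implybT.
by apply/setP => i; have := h i; rewrite ltn_ord /= => /eqP.
Qed.

Lemma agree_0 (P S : {set 'I_n}) : agree P S 0.
Proof. by apply/forallP => i. Qed.

Lemma GG_n g (P : {set 'I_n}) : GG g P n = g P.
Proof.
rewrite /GG (eq_bigl (fun S => S == P)) ?big_pred1_eq // => S; exact: agree_n.
Qed.

Lemma GG_0 g (P : {set 'I_n}) : GG g P 0 = \sum_S g S.
Proof. by rewrite /GG (eq_bigl xpredT) // => S; exact: agree_0. Qed.

Lemma agree_split (P S : {set 'I_n}) (j' : 'I_n) : j' \notin P ->
  (agree (j' |: P) S j'.+1 = agree P S j' && (j' \in S)) /\
  (agree P S j'.+1 = agree P S j' && (j' \notin S)).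
Proof.
move=> jP; split.
  apply/forallP/andP => [h|[/forallP h1 h2] i].
    split; last by have := h j'; rewrite ltnSn !inE eqxx /= => /eqP ->.
    apply/forallP => i; apply/implyP => lij; have := h i.
    rewrite ltnS ltnW //= !inE.
    by have -> : (i == j') = false by apply/negbTE; apply: contraTneq lij => ->; rewrite ltnn.
  apply/implyP; rewrite ltnS leq_eqVlt => /orP[/eqP ij|lij].
    have -> : i = j' by apply: val_inj.
    by rewrite !inE eqxx h2.
  rewrite !inE; have -> : (i == j') = false by apply/negbTE; apply: contraTneq lij => ->; rewrite ltnn.
  by have := h1 i; rewrite lij.
apply/forallP/andP => [h|[/forallP h1 h2] i].
  split; last by have := h j'; rewrite ltnSn (negbTE jP) /= => /eqP ->.
  apply/forallP => i; apply/implyP => lij; have := h i.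
  by rewrite ltnS ltnW.
apply/implyP; rewrite ltnS leq_eqVlt => /orP[/eqP ij|lij].
  have -> : i = j' by apply: val_inj.
  by rewrite (negbTE jP) (negbTE h2).
by have := h1 i; rewrite lij.
Qed.

Lemma GG_split g (P : {set 'I_n}) (j' : 'I_n) : j' \notin P ->
  GG g P j' = GG g (j' |: P) j'.+1 + GG g P j'.+1.
Proof.
move=> jP.
rewrite /GG [LHS](bigID (fun S : {set 'I_n} => j' \in S)) /=; congr (_ + _).
  by apply: eq_bigl => S; have [e1 e2] := agree_split S jP; rewrite e1.
by apply: eq_bigl => S; have [e1 e2] := agree_split S jP; rewrite e2.
Qed.

Lemma GG_part g (P : {set 'I_n}) (j : nat) : (j <= n)%N ->
  (forall i : 'I_n, (j <= i)%N -> i \notin P) ->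
  GG g P j = \sum_(i : 'I_n | (j <= i)%N) GG g (i |: P) i.+1 + GG g P n.
Proof.
move: {2}(n - j)%N (erefl (n - j)%N) => k; elim: k j => [|k IH] j ek jn hP.
  have -> : j = n by apply/eqP; rewrite eqn_leq jn /= -subn_eq0 ek.
  rewrite big1 ?add0r // => i; by rewrite leqNgt ltn_ord.
have jn' : (j < n)%N by rewrite -subn_gt0 ek.
pose j' := Ordinal jn'.
have -> : GG g P j = GG g P j' by [].
rewrite GG_split; last by apply: hP => /=.
rewrite (IH j.+1) //; last first.
- by move=> i hi; apply: hP; apply: ltnW.
- by rewrite subnS ek.
rewrite addrA; congr (_ + _).
rewrite [RHS](bigD1 j') //=; congr (_ + _).
apply: eq_bigl => i; rewrite ltn_neqAle andbC; congr (_ && _).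
by rewrite eq_sym -(inj_eq val_inj).
Qed.

Lemma pi_EE L S : pi L S != 0 -> S \in EE.
Proof.
apply: contraR => SE.
have ST : (S == setT) = false by apply: contraNF SE => /eqP ->; exact: setT_EE.
by rewrite /pi /pp /wt (negbTE SE) ST mul0r mulr0 mulr0 addr0.
Qed.

Lemma EE_feas P : P \in EE -> exists F, feas P F.
Proof. by rewrite inE => /existsP[F /andP[h1 h2]]; exists F; rewrite /feas h1 h2. Qed.

Lemma Fstar_spec P cv : (exists F, feas P F) ->
  feas P (Fstar P cv) /\
  forall G, feas P G -> \sum_(i in Fstar P cv) cv i <= \sum_(i in G) cv i.
Proof.
move=> [F hF]; rewrite /Fstar; case: pickP => [F0 hF0|none]; last by have := none F; rewrite hF.
by case: (arg_minP (fun F : {set 'I_n} => \sum_(i in F) cv i) hF0) => G hG hmin; split.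
Qed.

Lemma mass_ge0 L P j : 0 <= mass L P j.
Proof. by apply: sumr_ge0 => S _; exact: pi_ge0. Qed.

Lemma notin_cur (P : {set 'I_n}) (i : 'I_n) : (cur P <= i)%N -> i \notin P.
Proof. by move=> h; apply/negP => /cur_lt; rewrite ltnNge h. Qed.

Lemma strat_valid : valid_strategy Fam strat.
Proof.
move=> h; rewrite /strat.
set L := (st h).1.1; set cv := (st h).1.2; set P := opened h; set j := cur P.
set m := mass L P j.
case: (ltrP 0 m) => m0; last first.
  split; first by move=> a; rewrite ler0n.
  split.
    rewrite (bigD1 (a0 P cv)) //= eqxx big1 ?addr0 // => a /negbTE ->; done.
  move=> a; rewrite pnatr_eq0 eqb0 negbK => /eqP ->.
  rewrite /a0; case: ifP => [/existsP ex|nex].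
    by have [] := Fstar_spec cv ex.
  case: pickP => [i iP|none] //=.
  exfalso; case: FamN => F0 HF0.
  have PT : P = setT by apply/setP => i; rewrite inE; have := none i; rewrite /= => /negbFE.
  suff : [exists F, feas P F] by rewrite nex.
  apply/existsP; exists F0; by rewrite /feas HF0 PT subsetT.
split.
  move=> [i|F] /=; first by case: ifP => // _; rewrite divr_ge0 ?mass_ge0 ?ltW.
  by case: ifP => // _; rewrite divr_ge0 ?mass_ge0 ?ltW.
split.
  rewrite big_sumType /=.
  rewrite -big_mkcond /= -big_mkcond /= big_pred1_eq -mulr_suml -mulrDl.
  rewrite /m /mass -GG_part ?divff ?gt_eqF //; first exact: cur_le.
  by move=> i; exact: notin_cur.
move=> [i|F] /=.
  case: ifP => [hi _|_]; last by rewrite eqxx.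
  exact: notin_cur.
case: ifP => [/eqP -> hne|_]; last by rewrite eqxx.
have : mass L P n != 0 by apply: contraNneq hne => ->; rewrite mul0r.
rewrite /mass GG_n => /pi_EE /EE_feas ex.
by have [] := Fstar_spec cv ex.
Qed.

Definition sel (c : {ffun 'I_n -> R}) (S : {set 'I_n}) : R :=
  \big[Num.min/(\sum_(i in S) c i)]_(F in Fam | F \subset S) (\sum_(i in F) c i).

Lemma ellE (c : {ffun 'I_n -> R}) (S : {set 'I_n}) : ell c S = #|S|%:R + sel c S.
Proof. by []. Qed.

Lemma sum_sub_le (c : {ffun 'I_n -> R}) (F S : {set 'I_n}) : (forall i, 0 <= c i) ->
  F \subset S -> \sum_(i in F) c i <= \sum_(i in S) c i.
Proof.
move=> c0 FS; rewrite [X in _ <= X](bigID (fun i => i \in F)) /=.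
rewrite [X in _ <= X + _](eq_bigl (fun i => i \in F)); last first.
  by move=> i /=; apply/andP/idP => [[]//|iF]; split => //; exact: (subsetP FS).
by rewrite lerDl; apply: sumr_ge0 => i _.
Qed.

Lemma sel_ge0 (c : {ffun 'I_n -> R}) (S : {set 'I_n}) : (forall i, 0 <= c i) -> 0 <= sel c S.
Proof.
move=> c0; rewrite /sel; apply: (big_ind (fun x => 0 <= x)).
- by apply: sumr_ge0.
- by move=> x y hx hy; rewrite le_min hx hy.
- by move=> F _; apply: sumr_ge0.
Qed.

Lemma sel_ge (c : {ffun 'I_n -> R}) (S F : {set 'I_n}) : (forall i, 0 <= c i) -> feas S F ->
  (forall G, feas S G -> \sum_(i in F) c i <= \sum_(i in G) c i) ->
  \sum_(i in F) c i <= sel c S.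
Proof.
move=> c0 /andP[FF FS] hmin; rewrite /sel.
apply: (big_ind (fun x => \sum_(i in F) c i <= x)).
- exact: sum_sub_le.
- by move=> x y hx hy; rewrite le_min hx hy.
- by move=> G /andP[h1 h2]; apply: hmin; rewrite /feas h1 h2.
Qed.

Lemma ell_ge0 (c : {ffun 'I_n -> R}) (S : {set 'I_n}) : (forall i, 0 <= c i) -> 0 <= ell c S.
Proof. by move=> c0; rewrite ellE addr_ge0 ?ler0n ?sel_ge0. Qed.

Section Main.
Variables (c : nat -> {ffun 'I_n -> R}) (T : nat) (Sst : {set 'I_n}).
Hypothesis c_ge0 : forall t i, 0 <= c t i.
Hypothesis ell_leM : forall t S, ell (c t) S <= M.
Hypothesis Sst_EE : Sst \in EE.
Hypothesis ell_Sst : forall t, 1 <= ell (c t) Sst.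

Definition Fb (t : nat) (L : {ffun {set 'I_n} -> R}) : R :=
  3 * \sum_(t <= tau < T) ell (c tau) Sst + Gp Sst L.

Definition gfun (t : nat) (L : {ffun {set 'I_n} -> R}) (P : {set 'I_n}) (S : {set 'I_n}) : R :=
  pi L S * ((#|S|%:R - #|P|%:R) + sel (c t) S + Fb t.+1 (upd L S (c t))).

Definition RHS (h : history R n) : R :=
  GG (gfun (rounds_done h) (st h).1.1 (opened h)) (opened h) (cur (opened h)).

Definition inv (h : history R n) : Prop :=
  forall i, i \in opened h -> (st h).1.2 i = c (rounds_done h) i.

Lemma exp_cost_done f (h : history R n) :
  (T <= rounds_done h)%N -> exp_cost strat c T f h = 0.
Proof. by case: f => //= f ->. Qed.

Lemma Fb_ge0 t L : 0 <= Fb t L.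
Proof.
rewrite /Fb addr_ge0 ?Gp_ge0 // mulr_ge0 //; apply: sumr_ge0 => tau _.
exact: ell_ge0.
Qed.

Lemma agree_sub (P S : {set 'I_n}) : agree P S (cur P) -> P \subset S.
Proof.
move=> /forallP h; apply/subsetP => i iP; have := h i.
by rewrite cur_lt //= iP => /eqP ->.
Qed.

Lemma RHS_ge0 h : 0 <= RHS h.
Proof.
rewrite /RHS /GG; set P := opened h; apply: sumr_ge0 => S /agree_sub PS.
rewrite /gfun; apply: mulr_ge0; first exact: pi_ge0.
have h1 : 0 <= (#|S|%:R - #|P|%:R : R) by rewrite subr_ge0 ler_nat subset_leq_card.
have h2 := sel_ge0 S (c_ge0 (rounds_done h)).
have h3 := Fb_ge0 (rounds_done h).+1 (upd (st h).1.1 S (c (rounds_done h))).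
rewrite /P in h1 *; lra.
Qed.

Lemma mass0 L : mass L set0 (cur set0) = 1.
Proof. by rewrite cur_set0 /mass GG_0 sum_pi. Qed.

Lemma bnd h : opened h = set0 -> (rounds_done h < T)%N ->
  RHS h <= Fb (rounds_done h) (st h).1.1.
Proof.
move=> h0 ht; rewrite /RHS h0 cur_set0 GG_0.
set t := rounds_done h; set L := (st h).1.1.
rewrite /gfun cards0.
rewrite (eq_bigr (fun S => pi L S * (ell (c t) S + Gp Sst (upd L S (c t))) +
     pi L S * (3 * \sum_(t.+1 <= tau < T) ell (c tau) Sst))); last first.
  by move=> S _; rewrite /Fb ellE subr0; ring.
rewrite big_split /= -mulr_suml sum_pi mul1r.
have := step (fun S => ell_ge0 S (c_ge0 t)) (@ell_leM t) (ell_Sst t) L.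
rewrite /Fb (big_ltn ht) => hs.
rewrite mulrDr; lra.
Qed.

Lemma main f : forall h : history R n, inv h -> (rounds_done h < T)%N ->
  mass (st h).1.1 (opened h) (cur (opened h)) * exp_cost strat c T f h <= RHS h.
Proof.
elim: f => [|f IH] h hinv ht.
  by rewrite /= mulr0; exact: RHS_ge0.
have -> : exp_cost strat c T f.+1 h =
  \sum_(a : act n) strat h a *
      match a with
      | inl i => 1 + exp_cost strat c T f (rcons h (a, c (rounds_done h) i))
      | inr F => \sum_(i in F) c (rounds_done h) i + exp_cost strat c T f (rcons h (a, 0))
      end.
  by rewrite /= leqNgt ht.
set t := rounds_done h; set L := (st h).1.1; set cv := (st h).1.2.
set P := opened h; set j := cur P; set m := mass L P j.
case: (ltrP 0 m) => m0; last first.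
  have -> : m = 0 by apply/eqP; rewrite eq_le m0 mass_ge0.
  by rewrite mul0r; exact: RHS_ge0.
have sI : forall i, m * strat h (inl i) = if (j <= i)%N then mass L (i |: P) i.+1 else 0.
  move=> i; rewrite /strat -/L -/cv -/P -/j -/m m0 /=.
  by case: ifP => _; [rewrite mulrC divfK ?gt_eqF | rewrite mulr0].
have sF : forall F, m * strat h (inr F) = if F == Fstar P cv then mass L P n else 0.
  move=> F; rewrite /strat -/L -/cv -/P -/j -/m m0 /=.
  by case: ifP => _; [rewrite mulrC divfK ?gt_eqF | rewrite mulr0].
rewrite mulr_sumr big_sumType /=.
set g := gfun t L P.
have -> : RHS h = GG g P j by [].
rewrite (GG_part g (cur_le P)); last by move=> i; exact: notin_cur.
apply: lerD.
  rewrite (eq_bigr (fun i : 'I_n => if (j <= i)%N then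
       mass L (i |: P) i.+1 * (1 + exp_cost strat c T f (rcons h (inl i, c t i))) else 0));
    last by move=> i _; rewrite mulrA sI; case: ifP => _ //; rewrite mul0r.
  rewrite -big_mkcond /=; apply: ler_sum => i ji.
  set hi := rcons h (inl i, c t i).
  have iP : i \notin P by exact: notin_cur.
  have r_hi : rounds_done hi = t by rewrite /hi rounds_rcons addn0.
  have o_hi : opened hi = i |: P by rewrite /hi opened_rcons.
  have L_hi : (st hi).1.1 = L by rewrite /hi st_rcons.
  have c_hi : cur (i |: P) = i.+1 by rewrite cur_U1.
  have inv_hi : inv hi.
    move=> k; rewrite o_hi r_hi /hi st_rcons /= ffunE !inE.
    case: eqP => [-> _ //|_ kP]; exact: hinv.
  have := IH hi inv_hi; rewrite r_hi ht => /(_ isT).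
  rewrite /RHS r_hi L_hi o_hi c_hi => hIH.
  rewrite mulrDr mulr1.
  apply: le_trans (lerD (lexx _) hIH) _.
  rewrite /mass /GG -big_split /=; apply: ler_sum => S _.
  rewrite /g /gfun cardsU1 iP /= natrD.
  by rewrite le_eqVlt; apply/orP; left; apply/eqP; ring.
rewrite (eq_bigr (fun F : {set 'I_n} => if F == Fstar P cv then
     mass L P n * (\sum_(k in F) c t k + exp_cost strat c T f (rcons h (inr F, 0))) else 0));
  last by move=> F _; rewrite mulrA sF; case: ifP => _ //; rewrite mul0r.
rewrite -big_mkcond big_pred1_eq /mass !GG_n /g /gfun subrr add0r.
set FS := Fstar P cv.
case: (eqVneq (pi L P) 0) => [->|piP]; first by rewrite !mul0r.
apply: ler_wpM2l; first exact: pi_ge0.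
have ex := EE_feas (pi_EE piP).
have [feasF minF] := Fstar_spec cv ex.
have cvP : forall G : {set 'I_n}, G \subset P -> \sum_(k in G) cv k = \sum_(k in G) c t k.
  by move=> G GP; apply: eq_bigr => k kG; apply: hinv; exact: (subsetP GP).
apply: lerD.
  apply: sel_ge => //.
  move=> G fG; rewrite -!cvP; first exact: minF.
  - by case/andP: fG.
  - by case/andP: feasF.
set hs := rcons h (inr FS, 0).
have r_hs : rounds_done hs = t.+1 by rewrite /hs rounds_rcons addn1.
have o_hs : opened hs = set0 by rewrite /hs opened_rcons.
have L_hs : (st hs).1.1 = upd L P (c t).
  rewrite /hs st_rcons /= st_opened -/P /upd; case: ifP => // /eqP PT.
  congr (fun x => [ffun S => L S + ell x S / pi L setT]).
  by apply/ffunP => k; apply: hinv; rewrite -/P PT inE.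
case: (ltnP t.+1 T) => htT; last first.
  by rewrite exp_cost_done ?r_hs // Fb_ge0.
have inv_hs : inv hs by move=> k; rewrite o_hs inE.
have := IH hs inv_hs; rewrite r_hs htT => /(_ isT).
rewrite o_hs mass0 mul1r => h1.
apply: le_trans h1 _.
by rewrite -L_hs -r_hs; apply: bnd; rewrite ?o_hs ?r_hs.
Qed.

Lemma alg_bound : alg_cost strat c T <= Fb 0 0.
Proof.
rewrite /alg_cost.
case: (posnP T) => [T0|Tpos].
  by rewrite exp_cost_done ?T0 // Fb_ge0.
have hinv : inv [::] by move=> i; rewrite inE.
have := main (T * n.+1) hinv Tpos.
rewrite mass0 mul1r => h1; apply: le_trans h1 _.
exact: (bnd (h := [::])).
Qed.

End Main.
End Alg.

Lemma sel_le_idx (R : realType) n (Fam : {set {set 'I_n}}) (c : {ffun 'I_n -> R}) S :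
  sel Fam c S <= \sum_(i in S) c i.
Proof.
rewrite /sel; apply: (big_rec (fun x => x <= \sum_(i in S) c i)) => //.
by move=> F y _ hy; rewrite ge_min hy orbT.
Qed.

Lemma na_total_ge0 (R : realType) n (Fam : {set {set 'I_n}}) (c : nat -> {ffun 'I_n -> R}) T S :
  (forall t i, 0 <= c t i) -> 0 <= na_total Fam c T S.
Proof.
move=> c0; apply: sumr_ge0 => t _.
by apply: ell_ge0 => i; exact: c0.
Qed.

Lemma OPT_ge0 (R : realType) n (Fam : {set {set 'I_n}}) (c : nat -> {ffun 'I_n -> R}) T :
  (forall t i, 0 <= c t i) -> 0 <= OPT Fam c T.
Proof.
move=> c0; rewrite /OPT; apply: (big_ind (fun x => 0 <= x)).
- exact: na_total_ge0.
- by move=> x y hx hy; rewrite le_min hx hy.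
- by move=> S _; exact: na_total_ge0.
Qed.

Lemma general (R : realType) n (Fam : {set {set 'I_n}}) (B alpha : R) :
  3 <= alpha -> (exists F0, F0 \in Fam) -> (forall F, F \in Fam -> F != set0) ->
  exists s : strategy R n, valid_strategy Fam s /\ approx_no_regret Fam B alpha s.
Proof.
move=> a3 FamN Fne.
pose M : R := 1 + n%:R + n%:R * `|B|.
have M1 : 1 <= M by rewrite /M -addrA lerDl addr_ge0 ?mulr_ge0.
exists (strat Fam M); split; first exact: strat_valid.
move=> eps eps0.
pose K0 : R := 2 / eta M * ln (Phi Fam M 0).
have K00 : 0 <= K0.
  rewrite /K0; apply: mulr_ge0; first by apply: divr_ge0 => //; apply: ltW; exact: eta_gt0.
  apply: ln_ge0.
  apply: le_trans (Phi_ge_wt Fam M 0 setT).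
  by rewrite /wt setT_EE // ffunE mulr0 oppr0 expR0.
pose T0 := (Num.Def.archi_bound (K0 / eps)).+1.
exists T0 => T hT c hc.
have c0 : forall t i, 0 <= c t i by move=> t i; case/andP: (hc t i).
have cB : forall t i, c t i <= `|B| by move=> t i; case/andP: (hc t i) => _ h; apply: le_trans h (ler_norm _).
have ellM : forall t S, ell Fam (c t) S <= M.
  move=> t S; rewrite ellE.
  apply: le_trans (lerD (lexx _) (sel_le_idx Fam (c t) S)) _.
  have h1 : (#|S|%:R : R) <= n%:R by rewrite ler_nat; apply: leq_trans (max_card _) _; rewrite card_ord.
  have h2 : \sum_(i in S) c t i <= n%:R * `|B|.
    apply: le_trans (_ : \sum_(i in S) `|B| <= _); first by apply: ler_sum => i _.
    rewrite sumr_const -[_ *+ #|S|]mulr_natl; apply: ler_wpM2r => //.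
  rewrite /M; lra.
have bound : forall S, S \in EE Fam -> alg_cost (strat Fam M) c T <= 3 * na_total Fam c T S + K0.
  move=> S SE.
  have ellS : forall t, 1 <= ell Fam (c t) S.
    move=> t; rewrite ellE.
    move: SE; rewrite inE => /existsP[F /andP[FF FS]].
    have : (0 < #|S|)%N.
      apply: leq_trans (subset_leq_card FS); rewrite card_gt0; exact: Fne.
    rewrite -(ler_nat R) => h; have := sel_ge0 Fam S (c0 t); lra.
  have := alg_bound M1 FamN T c0 ellM SE ellS.
  rewrite /Fb /Gp ffunE mulr0 addr0 -/K0.
  by rewrite /na_total big_mkord.
have OPTb : alg_cost (strat Fam M) c T <= 3 * OPT Fam c T + K0.
  rewrite /OPT; apply: (big_ind (fun x => alg_cost (strat Fam M) c T <= 3 * x + K0)).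
  - by apply: bound; exact: setT_EE.
  - move=> x y hx hy; rewrite /Num.Def.minr; by case: ifP.
  - by move=> S SE; apply: bound; rewrite inE.
have O0 := OPT_ge0 Fam T c0.
have Tpos : (0 < T)%N by apply: leq_trans hT.
have TR : 0 < (T%:R : R) by rewrite ltr0n.
rewrite ler_pdivrMr //.
have hK : K0 <= eps * T%:R.
  have hb : K0 / eps < (Num.Def.archi_bound (K0 / eps))%:R.
    by apply: archi_boundP; rewrite divr_ge0 // ltW.
  have : (Num.Def.archi_bound (K0 / eps))%:R <= (T%:R : R) by rewrite ler_nat; apply: ltnW.
  move=> hT'; have : K0 / eps <= T%:R by lra.
  by rewrite ler_pdivrMr // mulrC.
have : (alpha - 3) * OPT Fam c T >= 0 by rewrite mulr_ge0 // subr_ge0.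
set O := OPT Fam c T; set A := alg_cost _ _ _; move: OPTb hK; rewrite -/O -/A.
set X := alpha * O; set Y := eps * _.
have -> : (alpha - 3) * O = X - 3 * O by rewrite /X; ring.
lra.
Qed.

Definition strat0 (R : realType) n : strategy R n := fun h a => (a == inr set0)%:R.

Lemma trivial_case (R : realType) n (Fam : {set {set 'I_n}}) (B alpha : R) :
  0 <= alpha -> set0 \in Fam ->
  exists s : strategy R n, valid_strategy Fam s /\ approx_no_regret Fam B alpha s.
Proof.
move=> a0 F0.
exists (@strat0 R n); split.
  move=> h; split; first by move=> a; rewrite ler0n.
  split; first by rewrite /strat0 (bigD1 (inr set0)) //= eqxx big1 ?addr0 // => a /negbTE ->.
  by move=> a; rewrite /strat0 pnatr_eq0 eqb0 negbK => /eqP -> /=; rewrite F0 sub0set.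
move=> eps eps0; exists 0%N => T _ c hc.
have e0 : forall f (h : history R n), exp_cost (@strat0 R n) c T f h = 0.
  elim=> [//|f IH] h /=; case: ifP => // _.
  rewrite (bigD1 (inr set0)) //= [X in _ + X]big1.
    by rewrite /strat0 eqxx mul1r IH big_pred0 ?addr0 // => i; rewrite inE.
  by move=> a /negbTE; rewrite /strat0 => ->; rewrite mul0r.
rewrite /alg_cost e0 sub0r.
have O0 : 0 <= OPT Fam c T by apply: OPT_ge0 => t i; case/andP: (hc t i).
apply: le_trans (ltW eps0).
rewrite mulNr oppr_le0; apply: divr_ge0; last by rewrite ler0n.
exact: mulr_ge0.
Qed.

Lemma matroid_cases n (I : {set {set 'I_n}}) k :
  is_matroid I -> matroid_rank I k ->
  (set0 \in bases I) \/
  ((exists F0, F0 \in bases I) /\ (forall F, F \in bases I -> F != set0)).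
Proof.
move=> [I0 Isub Iex] [[B0 B0I cB0] Ik].
case: (posnP k) => [k0|kpos].
  left; rewrite inE /is_basis I0 /=; apply/forallP => x; apply/implyP => _.
  by apply/negP => /Ik; rewrite k0 cardsU1 in_set0 cards0.
right; split.
  exists B0; rewrite inE /is_basis B0I /=; apply/forallP => x; apply/implyP => xB.
  apply/negP => /Ik; by rewrite cardsU1 xB cB0 ltnn.
move=> F; rewrite inE => /andP[FI /forallP hF]; apply/negP => /eqP F0.
have : (#|F| < #|B0|)%N by rewrite F0 cards0 cB0.
move=> /(Iex _ _ FI B0I) [x _ xI].
have := hF x; rewrite F0 inE /= => /negP; apply; by rewrite -F0.
Qed.

Lemma ksub_ne n k : (k <= n)%N -> exists F0 : {set 'I_n}, F0 \in ksub_fam n k.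
Proof.
move=> kn; exists [set widen_ord kn i | i : 'I_k].
rewrite inE card_imset ?cardsT ?card_ord //.
by move=> x y /(congr1 val) /= /val_inj.
Qed.

Unset Implicit Arguments.
Set Strict Implicit.
Theorem corollary5p5 (R : realType) :
  (* (i) one box: 3.16-approximate no-regret *)
  (forall (n : nat) (B : R), (0 < n)%N ->
     exists s : strategy R n,
       valid_strategy (single_fam n) s /\
       approx_no_regret (single_fam n) B (316%:R / 100%:R) s) /\
  (* (ii) k distinct boxes: 12.64-approximate no-regret *)
  (forall (n k : nat) (B : R), (0 < k <= n)%N ->
     exists s : strategy R n,
       valid_strategy (ksub_fam n k) s /\
       approx_no_regret (ksub_fam n k) B (1264%:R / 100%:R) s) /\
  (* (iii) basis of a rank-k matroid: O(log k)-approximate no-regret *)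
  (exists C : R, 0 < C /\
     forall (n k : nat) (I : {set {set 'I_n}}) (B : R),
       is_matroid I -> matroid_rank I k ->
       exists s : strategy R n,
         valid_strategy (bases I) s /\
         approx_no_regret (bases I) B (C * (trunc_log 2 k).+1%:R) s).
Proof.
split.
  move=> n B n0; apply: general.
  - by rewrite ler_pdivlMr // ?ltr0n // -natrM ler_nat.
  - by have [F0 hF] := ksub_ne (k := 1) n0; exists F0.
  - by move=> F; rewrite inE => /eqP cF; apply/eqP => F0; move: cF; rewrite F0 cards0.
split.
  move=> n k B /andP[k0 kn]; apply: general.
  - by rewrite ler_pdivlMr // ?ltr0n // -natrM ler_nat.
  - exact: ksub_ne.
  - by move=> F; rewrite inE => /eqP cF; apply/eqP => F0; move: cF k0; rewrite F0 cards0 => <-.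
exists 3; split => //.
move=> n k I B hI hk.
have a3 : 3 <= 3 * (trunc_log 2 k).+1%:R :> R.
  by rewrite -natrM ler_nat leq_pmulr.
case: (matroid_cases hI hk) => [h0|[hne hnz]].
  apply: trivial_case => //; apply: le_trans a3; lra.
exact: general.
Qed.
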